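(* Let $n\ge1$, let $\mathbf u(z)\in\mathbb R^n$ be a column vector function, let $A$ be a constant real skew-symmetric $n\times n$ matrix, and let $\nu\ne0$ be a constant. Define block matrices of block size $(1,n)\times(1,n)$ \[ {\cal B}_0=\begin{pmatrix} 1-\nu & 0\\ 0 & I_n \end{pmatrix},\quad {\cal B}_1=\begin{pmatrix} 0 & \mathbf u^T\\ \mathbf u & 0 \end{pmatrix},\quad {\cal B}_2=\begin{pmatrix} (\mathbf u,\mathbf u) & -(\mathbf u')^T\\ \mathbf u' & -\mathbf u\mathbf u^T \end{pmatrix}, \] \[ {\cal B}_3=\begin{pmatrix} 0 & 2(\mathbf u,\mathbf u)\mathbf u^T\\ 2(\mathbf u,\mathbf u)\mathbf u & \mathbf u'\mathbf u^T-\mathbf u(\mathbf u')^T \end{pmatrix},\quad {\cal A}_0=\begin{pmatrix} 0 & 0\\ 0 & A \end{pmatrix}, \] and \[ {\cal A}=-\nu^2\zeta(\zeta{\cal B}_0+{\cal B}_1)+z{\cal B}_0-\nu{\cal B}_2-\zeta^{-1}({\cal B}''_1-z{\cal B}_1-{\cal B}_3-{\cal A}_0),\qquad {\cal B}=\zeta{\cal B}_0+{\cal B}_1. \] Then the equation \[ \mathbf u'''= 3(\mathbf u,\mathbf u)\mathbf u'+3(\mathbf u,\mathbf u')\mathbf u+z\mathbf u'+\mathbf u+A\mathbf u \] admits the isomonodromic Lax representation ${\cal A}'={\cal B}_\zeta+[{\cal B},{\cal A}]$.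
   Context: Primes denote derivatives with respect to $z$; $\zeta$ is a spectral parameter independent of $z$; $(\cdot,\cdot)$ is the standard scalar product; $I_n$ the identity matrix. ''Admits the Lax representation'' means the matrix equation holds identically in $\zeta$ by virtue of the equation. *)

(* Defs.v *)
From HB Require Import structures.
From mathcomp Require Import all_boot all_order all_algebra.
From mathcomp Require Import all_classical all_reals all_analysis.
Set Implicit Arguments. Unset Strict Implicit. Unset Printing Implicit Defensive.
Import Order.TTheory GRing.Theory Num.Theory.
Local Open Scope ring_scope.

Section LaxDefs.
Variables (R : realType) (n : nat).

Definition dotp (v w : 'cV[R]_n) : R := (v^T *m w) 0 0.

Definition calB0 (nu : R) : 'M[R]_(1 + n) :=
  block_mx (1 - nu)%:M 0 0 1%:M.
Definition calB1 (v : 'cV[R]_n) : 'M[R]_(1 + n) :=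
  block_mx 0 v^T v 0.
Definition calB2 (v v' : 'cV[R]_n) : 'M[R]_(1 + n) :=
  block_mx (dotp v v)%:M (- v'^T) v' (- (v *m v^T)).
Definition calB3 (v v' : 'cV[R]_n) : 'M[R]_(1 + n) :=
  block_mx 0 ((2 * dotp v v) *: v^T) ((2 * dotp v v) *: v)
           (v' *m v^T - v *m v'^T).
Definition calA0 (A : 'M[R]_n) : 'M[R]_(1 + n) := block_mx 0 0 0 A.

Definition calB (nu : R) (u : R -> 'cV[R]_n) (zeta z : R) : 'M[R]_(1 + n) :=
  zeta *: calB0 nu + calB1 (u z).

Definition calA (nu : R) (A : 'M[R]_n) (u : R -> 'cV[R]_n) (zeta z : R)
  : 'M[R]_(1 + n) :=
  - (nu ^+ 2 * zeta) *: (zeta *: calB0 nu + calB1 (u z))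
  + z *: calB0 nu
  - nu *: calB2 (u z) (derive1 u z)
  - zeta^-1 *: (derive1 (derive1 (fun t => calB1 (u t))) z
                - z *: calB1 (u z) - calB3 (u z) (derive1 u z) - calA0 A).

End LaxDefs.

(* Main.v *)
Require Import Defs.
From HB Require Import structures.
From mathcomp Require Import all_boot all_order all_algebra.
From mathcomp Require Import all_classical all_reals all_analysis.
From mathcomp Require Import ring.
Import Order.TTheory GRing.Theory Num.Theory.
Local Open Scope ring_scope.
Set Implicit Arguments. Unset Strict Implicit. Unset Printing Implicit Defensive.

Section Aux.
Variable R : realType.

Lemma mxD (m n : nat) (M : R -> 'M[R]_(m,n)) (dM : 'M[R]_(m,n)) (t : R) :
 (forall i j, is_derive t 1 (fun x => M x i j) (dM i j)) -> is_derive t 1 M dM.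
Proof.
move=> H.
have dv : derivable M t 1 by apply/derivable_mxP => i j; case: (H i j).
apply: DeriveDef => //.
rewrite derive_mx //; apply/matrixP => i j; rewrite mxE.
by have [_ ->] := H i j.
Qed.

Lemma entryD (m n : nat) (M : R -> 'M[R]_(m,n)) (dM : 'M[R]_(m,n)) (t : R) i j :
  is_derive t 1 M dM -> is_derive t 1 (fun x => M x i j) (dM i j).
Proof.
case=> dv dval.
have di := (derivable_mxP M t 1).1 dv i j.
apply: DeriveDef => //.
have := derive_mx dv; rewrite dval => ->; by rewrite mxE.
Qed.

Lemma addD {V : normedModType R} (f g : R -> V) df dg (t : R) :
  is_derive t 1 f df -> is_derive t 1 g dg ->
  is_derive t 1 (fun x => f x + g x) (df + dg).
Proof. move=> ? ?; exact: is_deriveD. Qed.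

Lemma oppD {V : normedModType R} (f : R -> V) df (t : R) :
  is_derive t 1 f df -> is_derive t 1 (fun x => - f x) (- df).
Proof. move=> ?; exact: is_deriveN. Qed.

Lemma subD {V : normedModType R} (f g : R -> V) df dg (t : R) :
  is_derive t 1 f df -> is_derive t 1 g dg ->
  is_derive t 1 (fun x => f x - g x) (df - dg).
Proof. move=> ? ?; exact: is_deriveB. Qed.

Lemma cstD {V : normedModType R} (c : V) (t : R) :
  is_derive t 1 (fun x => c) 0.
Proof. exact: is_derive_cst. Qed.

Lemma idD (t : R) : is_derive t 1 (fun x : R => x) 1.
Proof. exact: is_derive_id. Qed.

Lemma mulD (f g : R -> R) df dg (t : R) :
  is_derive t 1 f df -> is_derive t 1 g dg ->
  is_derive t 1 (fun x => f x * g x) (df * g t + f t * dg).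
Proof.
move=> hf hg; have h := is_deriveM hf hg.
have -> : (fun x => f x * g x) = f * g by [].
apply: is_derive_eq h _.
by rewrite /GRing.scale /= addrC [g t * _]mulrC [f t * _]mulrC.
Qed.

Lemma sumD (k : nat) (h : 'I_k -> R -> R) dh (t : R) :
  (forall i, is_derive t 1 (h i) (dh i)) ->
  is_derive t 1 (fun x => \sum_(i < k) h i x) (\sum_(i < k) dh i).
Proof.
move=> H; have := is_derive_sum H => h2.
have -> : (fun x => \sum_(i < k) h i x) = \sum_(i < k) h i.
  by apply/funext => x; rewrite fct_sumE.
exact: h2.
Qed.


Lemma funD_ext {V : normedModType R} (f g : R -> V) d (t : R) :
  (forall x, f x = g x) -> is_derive t 1 g d -> is_derive t 1 f d.
Proof. by move=> e; have -> : f = g by apply/funext. Qed.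

Lemma mulmxD (m k p : nat) (F : R -> 'M[R]_(m,k)) (G : R -> 'M[R]_(k,p)) dF dG (t : R) :
  is_derive t 1 F dF -> is_derive t 1 G dG ->
  is_derive t 1 (fun x => F x *m G x) (dF *m G t + F t *m dG).
Proof.
move=> hF hG; apply: mxD => i j.
have e : forall x, (F x *m G x) i j = \sum_l F x i l * G x l j by move=> x; rewrite mxE.
apply: (funD_ext e).
apply: is_derive_eq.
  apply: sumD => l; apply: mulD; exact: entryD.
by rewrite !mxE -big_split.
Qed.

Lemma trD (m k : nat) (F : R -> 'M[R]_(m,k)) dF (t : R) :
  is_derive t 1 F dF -> is_derive t 1 (fun x => (F x)^T) dF^T.
Proof.
move=> hF; apply: mxD => i j.
have e : forall x, (F x)^T i j = F x j i by move=> x; rewrite mxE.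
apply: (funD_ext e).
rewrite mxE; exact: entryD.
Qed.

Lemma scaleD (m k : nat) (c : R -> R) (F : R -> 'M[R]_(m,k)) dc dF (t : R) :
  is_derive t 1 c dc -> is_derive t 1 F dF ->
  is_derive t 1 (fun x => c x *: F x) (dc *: F t + c t *: dF).
Proof.
move=> hc hF; apply: mxD => i j.
have e : forall x, (c x *: F x) i j = c x * F x i j by move=> x; rewrite mxE.
apply: (funD_ext e).
apply: is_derive_eq.
  apply: mulD => //; exact: entryD.
by rewrite !mxE.
Qed.

Lemma scalarD (k : nat) (c : R -> R) dc (t : R) :
  is_derive t 1 c dc -> is_derive t 1 (fun x => (c x)%:M : 'M[R]_k) dc%:M.
Proof.
move=> hc; apply: mxD => i j.
have e : forall x, ((c x)%:M : 'M[R]_k) i j = c x *+ (i == j) by move=> x; rewrite mxE.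
apply: (funD_ext e).
rewrite mxE; case: (i == j).
  by apply: (funD_ext (fun x => mulr1n _)); rewrite mulr1n.
by apply: (funD_ext (fun x => mulr0n _)); rewrite mulr0n; exact: cstD.
Qed.

Lemma blockD (m1 m2 k1 k2 : nat) (F1 : R -> 'M[R]_(m1,k1)) (F2 : R -> 'M[R]_(m1,k2))
  (F3 : R -> 'M[R]_(m2,k1)) (F4 : R -> 'M[R]_(m2,k2)) d1 d2 d3 d4 (t : R) :
  is_derive t 1 F1 d1 -> is_derive t 1 F2 d2 ->
  is_derive t 1 F3 d3 -> is_derive t 1 F4 d4 ->
  is_derive t 1 (fun x => block_mx (F1 x) (F2 x) (F3 x) (F4 x)) (block_mx d1 d2 d3 d4).
Proof.
move=> h1 h2 h3 h4; apply: mxD => i j.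
rewrite -[i]fintype.splitK -[j]fintype.splitK; case: (fintype.split i) => a; case: (fintype.split j) => b /=.
- apply: (funD_ext (fun x => block_mxEul _ _ _ _ _ _)); rewrite block_mxEul; exact: entryD.
- apply: (funD_ext (fun x => block_mxEur _ _ _ _ _ _)); rewrite block_mxEur; exact: entryD.
- apply: (funD_ext (fun x => block_mxEdl _ _ _ _ _ _)); rewrite block_mxEdl; exact: entryD.
- apply: (funD_ext (fun x => block_mxEdr _ _ _ _ _ _)); rewrite block_mxEdr; exact: entryD.
Qed.

End Aux.

Section TR.
Variable R : realType.
Lemma trD' m k (X Y : 'M[R]_(m,k)) : (X + Y)^T = X^T + Y^T.
Proof. exact: linearD. Qed.
Lemma trN' m k (X : 'M[R]_(m,k)) : (- X)^T = - X^T.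
Proof. exact: linearN. Qed.
Lemma trZ' m k a (X : 'M[R]_(m,k)) : (a *: X)^T = a *: X^T.
Proof. exact: linearZ. Qed.
Lemma dotE1 k (v w : 'cV[R]_k) : v^T *m w = (dotp v w)%:M.
Proof. by apply/matrixP => i j; rewrite (ord1 i) (ord1 j) /dotp [RHS]mxE eqxx mulr1n. Qed.
Lemma dotE2 k p (v w : 'cV[R]_k) (X : 'M[R]_(1,p)) : v^T *m (w *m X) = dotp v w *: X.
Proof. by rewrite mulmxA dotE1 mul_scalar_mx. Qed.
Lemma dotpC k (v w : 'cV[R]_k) : dotp v w = dotp w v.
Proof. by rewrite /dotp !mxE; apply: eq_bigr => l _; rewrite !mxE mulrC. Qed.
Lemma sAl m k p a (X : 'M[R]_(m,k)) (Y : 'M[R]_(k,p)) : (a *: X) *m Y = a *: (X *m Y).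
Proof. by rewrite scalemxAl. Qed.
Lemma sAr m k p a (X : 'M[R]_(m,k)) (Y : 'M[R]_(k,p)) : X *m (a *: Y) = a *: (X *m Y).
Proof. by rewrite scalemxAr. Qed.
Lemma mA' m k p q (X : 'M[R]_(m,k)) (Y : 'M[R]_(k,p)) (Z : 'M[R]_(p,q)) : X *m Y *m Z = X *m (Y *m Z).
Proof. by rewrite mulmxA. Qed.
End TR.

Lemma alg (R : realType) (n : nat) (A : 'M[R]_n) (hA : A^T = - A) (nu zeta z : R)
  (hz : zeta != 0) (U U1 U2 : 'cV[R]_n) :
  0 *: (zeta *: calB0 n nu + calB1 U) + - (nu ^+ 2 * zeta) *: (0 + calB1 U1) +
  (1 *: calB0 n nu + z *: 0) -
  (0 *: calB2 U U1 +
   nu *: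
   block_mx (dotp U1 U + dotp U U1)%:M (- U2^T) U2
     (- (U1 *m U^T + U *m U1^T))) -
  (0 *: (calB1 U2 - z *: calB1 U - calB3 U U1 - calA0 A) +
   zeta^-1 *:
   (calB1
      ((3 * dotp U U) *: U1 + (3 * dotp U U1) *: U + z *: U1 + U + A *m U) -
    (1 *: calB1 U + z *: calB1 U1) -
    block_mx 0
      ((0 * dotp U U + 2 * (dotp U1 U + dotp U U1)) *: U^T +
       (2 * dotp U U) *: U1^T)
      ((0 * dotp U U + 2 * (dotp U1 U + dotp U U1)) *: U +
       (2 * dotp U U) *: U1)
      (U2 *m U^T + U1 *m U1^T - (U1 *m U1^T + U *m U2^T)) -
    0)) =
  1 *: calB0 n nu + zeta *: 0 + 0 +
  ((zeta *: calB0 n nu + calB1 U) *m (- (nu ^+ 2 * zeta) *: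
                                      (zeta *: calB0 n nu + calB1 U) +
                                      z *: calB0 n nu - 
                                      nu *: calB2 U U1 -
                                      zeta^-1 *:
                                      (calB1 U2 - z *: calB1 U - calB3 U U1 -
                                       calA0 A)) -
   (- (nu ^+ 2 * zeta) *: (zeta *: calB0 n nu + calB1 U) + z *: calB0 n nu -
    nu *: calB2 U U1 -
    zeta^-1 *: (calB1 U2 - z *: calB1 U - calB3 U U1 - calA0 A)) *m 
   (zeta *: calB0 n nu + calB1 U)).
Proof.
rewrite !(scale0r, add0r, addr0, scaler0, mul0r, subr0, scale1r).
rewrite /calB0 /calB1 /calB2 /calB3 /calA0.
rewrite !(trD', trN', trZ', trmx_mul, hA).
rewrite !(scale_block_mx, opp_block_mx, add_block_mx).
rewrite !mulmx_block.
rewrite !(scale_block_mx, opp_block_mx, add_block_mx).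
congr block_mx.
all: rewrite ?(scaler0, addr0, add0r, sub0r, subr0, oppr0, mulmx0, mul0mx).
all: rewrite ?(mulmxDl, mulmxDr, mulmxN, mulNmx, mulmxBl, mulmxBr).
all: rewrite ?(mul_scalar_mx, mul_mx_scalar, mul1mx, mulmx1).
all: rewrite ?(sAl, sAr).
all: rewrite ?mA'.
all: rewrite ?(scalerN, scaleNr, scale1r).
all: rewrite ?(scaler0, addr0, add0r, sub0r, subr0, oppr0, mulmx0, mul0mx).
all: rewrite ?(mulmxDl, mulmxDr, mulmxN, mulNmx, mulmxBl, mulmxBr).
all: rewrite ?(mul_scalar_mx, mul_mx_scalar, mul1mx, mulmx1).
all: rewrite ?(sAl, sAr).
all: rewrite ?mA'.
all: rewrite ?(scalerN, scaleNr, scale1r).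
all: rewrite ?(dotE1, dotE2).
all: rewrite ?(scaler0, addr0, add0r, sub0r, subr0, oppr0, mulmx0, mul0mx).
all: rewrite ?(mulmxDl, mulmxDr, mulmxN, mulNmx, mulmxBl, mulmxBr).
all: rewrite ?(mul_scalar_mx, mul_mx_scalar, mul1mx, mulmx1).
all: rewrite ?(sAl, sAr).
all: rewrite ?mA'.
all: rewrite ?(scalerN, scaleNr, scale1r).
all: rewrite ?(scaler0, addr0, add0r, sub0r, subr0, oppr0, mulmx0, mul0mx).
all: rewrite ?(mulmxDl, mulmxDr, mulmxN, mulNmx, mulmxBl, mulmxBr).
all: rewrite ?(mul_scalar_mx, mul_mx_scalar, mul1mx, mulmx1).
all: rewrite ?(sAl, sAr).
all: rewrite ?mA'.
all: rewrite ?(scalerN, scaleNr, scale1r).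
all: rewrite ?scalerA.
all: rewrite ?[dotp U1 U]dotpC ?[dotp U2 U]dotpC.
all: move: (U^T *m A) (A *m U) => V W.
all: apply/matrixP => i j.
all: rewrite !mxE.
all: rewrite ?big_ord1.
all: rewrite ?mxE.
1: rewrite (ord1 i) (ord1 j) eqxx !mulr1n.
4: case: (i == j); rewrite ?mulr1n ?mulr0n.
all: field; exact: hz.
Qed.

Section Aux2.
Variable R : realType.
Variable n : nat.

Lemma B1D (f : R -> 'cV[R]_n) df (t : R) : is_derive t 1 f df ->
  is_derive t 1 (fun x => calB1 (f x)) (calB1 df).
Proof.
move=> h; rewrite /calB1; apply: blockD; try exact: cstD; try (apply: trD; exact: h); try exact: h.
Qed.

Lemma dotpD (f g : R -> 'cV[R]_n) df dg (t : R) :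
  is_derive t 1 f df -> is_derive t 1 g dg ->
  is_derive t 1 (fun x => dotp (f x) (g x)) (dotp df (g t) + dotp (f t) dg).
Proof.
move=> hf hg; rewrite /dotp.
apply: is_derive_eq.
  apply: (@entryD _ _ _ (fun x => (f x)^T *m g x)).
  apply: mulmxD => //; exact: trD.
by rewrite mxE.
Qed.
End Aux2.

Ltac dstep := first [ apply: B1D | apply: dotpD
  | apply: subD | apply: addD | apply: oppD | apply: scaleD | apply: mulmxD
  | apply: trD | apply: blockD | apply: scalarD | apply: mulD | apply: idD | apply: cstD ].
Ltac dtac := repeat dstep.

Unset Implicit Arguments.
Theorem mainTheorem11 (R : realType) (n : nat) (hn : (1 <= n)%N)
  (A : 'M[R]_n) (hA : A^T = - A) (nu : R) (hnu : nu != 0)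
  (u : R -> 'cV[R]_n)
  (hu1 : forall z, derivable u z 1)
  (hu2 : forall z, derivable (derive1 u) z 1)
  (hu3 : forall z, derivable (derive1 (derive1 u)) z 1)
  (hode : forall z,
     derive1 (derive1 (derive1 u)) z =
       (3 * dotp (u z) (u z)) *: derive1 u z
       + (3 * dotp (u z) (derive1 u z)) *: u z
       + z *: derive1 u z + u z + A *m u z) :
  forall zeta z : R, zeta != 0 ->
    derive1 (calA nu A u zeta) z =
      derive1 (fun x => calB nu u x z) zeta
      + (calB nu u zeta z *m calA nu A u zeta z
         - calA nu A u zeta z *m calB nu u zeta z).
Proof.
move=> zeta z hz.
have D0 : forall t : R, is_derive t 1 u (derive1 u t).
  move=> t; exact: (DeriveDef (hu1 t) (esym (derive1E u t))).
have D1 : forall t : R, is_derive t 1 (derive1 u) (derive1 (derive1 u) t).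
  move=> t; exact: (DeriveDef (hu2 t) (esym (derive1E _ t))).
have D2 : forall t : R, is_derive t 1 (derive1 (derive1 u)) (derive1 (derive1 (derive1 u)) t).
  move=> t; exact: (DeriveDef (hu3 t) (esym (derive1E _ t))).
have E1 : derive1 (fun t => calB1 (u t)) = fun t => calB1 (derive1 u t).
  by apply/funext => t; rewrite derive1E; have [_ ->] := B1D (D0 t).
have E2 : derive1 (derive1 (fun t => calB1 (u t))) = fun t => calB1 (derive1 (derive1 u) t).
  by rewrite E1; apply/funext => t; rewrite derive1E; have [_ ->] := B1D (D1 t).
eassert (hAd : is_derive z 1 (calA nu A u zeta) _).
  rewrite /calA E2.
  dtac.
eassert (hBd : is_derive zeta 1 (fun x => calB nu u x z) _).
  rewrite /calB; dtac.
rewrite derive1E; have [_ ->] := hAd.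
rewrite [derive1 (fun x => calB nu u x z) zeta]derive1E; have [_ ->] := hBd.
rewrite /calA E2 /calB; cbv beta.
rewrite hode.
move: (u z) (derive1 u z) (derive1 (derive1 u) z) => U U1 U2.
exact: (@alg _ _ _ hA _ _ _ hz _ _ _).
Qed.
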